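(* Let $\mathcal{H}$ be a Hilbert space of finite dimension $d$, let $\mathcal{Z}$ be a finite set, let $\{p_z\}_{z\in\mathcal{Z}}$ be a fixed probability distribution on $\mathcal{Z}$, let $A^{(i)}_z$ ($i=1,\dots,R$, $z\in\mathcal{Z}$) be Hermitian operators on $\mathcal{H}$, and let $b_1,\dots,b_R\in\mathbb{R}$. Define the feasible set $$\mathcal{K}=\Big\{\textstyle\bigoplus_{z\in\mathcal{Z}}\rho_z \;\Big|\; \rho_z\in\mathcal{D}\ \forall z\in\mathcal{Z},\ \ \sum_{z\in\mathcal{Z}}p_z\operatorname{Tr}[A^{(i)}_z\rho_z]=b_i\ \ \forall i\in\{1,\dots,R\}\Big\},$$ viewed as a convex subset of the real vector space $\mathcal{M}=\bigoplus_{z\in\mathcal{Z}}\mathcal{B}(\mathcal{H})$ of block-diagonal matrices. Then every extreme point $\bigoplus_z\rho_z$ of $\mathcal{K}$ has at most $R$ blocks $\rho_z$ that are not pure states (i.e. at most $R$ labels $z$ for which $\rho_z$ is not of the form $|\phi\rangle\langle\phi|$).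
   Context: $\mathcal{D}$ denotes the set of density matrices on $\mathcal{H}$ (Hermitian, positive semi-definite, unit trace operators). An element $\bigoplus_z\rho_z$ is a collection of conditional states, one per label $z$, representing a quantum state ensemble $\{(p_z,\rho_z)\}$ with the probabilities $p_z$ held fixed. An extreme point of a convex set is an element that cannot be written as $\lambda x'+(1-\lambda)x''$ with $\lambda\in(0,1)$ and $x',x''$ in the set unless $x'=x''=x$. *)

(* Defs.v *)
From HB Require Import structures.
From mathcomp Require Import all_boot all_order all_algebra.
Set Implicit Arguments. Unset Strict Implicit. Unset Printing Implicit Defensive.
Import Order.TTheory GRing.Theory Num.Theory.
Local Open Scope ring_scope.

(* Complex scalars: an arbitrary numeric algebraically closed field C
   (e.g. algC or complex R); 0 <= x in C means x is real and nonnegative. *)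

Definition mxadj (C : numClosedFieldType) m n (A : 'M[C]_(m, n)) : 'M[C]_(n, m) :=
  \matrix_(i, j) (A j i)^*.

Definition hermitian_mx (C : numClosedFieldType) d (A : 'M[C]_d) : Prop :=
  mxadj A = A.

Definition psd (C : numClosedFieldType) d (A : 'M[C]_d) : Prop :=
  hermitian_mx A /\ forall v : 'cV[C]_d, 0 <= (mxadj v *m A *m v) 0 0.

Definition density (C : numClosedFieldType) d (rho : 'M[C]_d) : Prop :=
  psd rho /\ \tr rho = 1.

Definition pure_state (C : numClosedFieldType) d (rho : 'M[C]_d) : Prop :=
  exists phi : 'cV[C]_d, rho = phi *m mxadj phi.

(* the feasible set K, elements are families (rho_z)_z = block-diagonal ⊕_z rho_z *)
Definition feasible (C : numClosedFieldType) d (Z : finType) (R : nat)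
  (p : Z -> C) (A : 'I_R -> Z -> 'M[C]_d) (b : 'I_R -> C)
  (x : {ffun Z -> 'M[C]_d}) : Prop :=
  (forall z, density (x z)) /\
  (forall i : 'I_R, \sum_(z : Z) p z * \tr (A i z *m x z) = b i).

Definition extreme_point (C : numClosedFieldType) d (Z : finType)
  (K : {ffun Z -> 'M[C]_d} -> Prop) (x : {ffun Z -> 'M[C]_d}) : Prop :=
  K x /\
  forall (lam : C) (x1 x2 : {ffun Z -> 'M[C]_d}),
    lam \is Num.real -> 0 < lam < 1 -> K x1 -> K x2 ->
    x = [ffun z => lam *: x1 z + (1 - lam) *: x2 z] ->
    x1 = x /\ x2 = x.

(* Main.v *)
Require Import Defs.
From HB Require Import structures.
From mathcomp Require Import all_boot all_order all_algebra.
From mathcomp Require Import ring.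
Import Order.TTheory GRing.Theory Num.Theory.
Set Implicit Arguments. Unset Strict Implicit. Unset Printing Implicit Defensive.
Local Open Scope ring_scope.

Lemma adjE (C : numClosedFieldType) m n (A : 'M[C]_(m, n)) i j :
  mxadj A i j = (A j i)^*.
Proof. by rewrite mxE. Qed.

Lemma adjK (C : numClosedFieldType) m n (A : 'M[C]_(m, n)) : mxadj (mxadj A) = A.
Proof. by apply/matrixP => i j; rewrite !adjE conjCK. Qed.

Lemma adjD (C : numClosedFieldType) m n (A B : 'M[C]_(m, n)) :
  mxadj (A + B) = mxadj A + mxadj B.
Proof. by apply/matrixP => i j; rewrite !(adjE, mxE) rmorphD. Qed.

Lemma adjZ (C : numClosedFieldType) m n (a : C) (A : 'M[C]_(m, n)) :
  mxadj (a *: A) = a^* *: mxadj A.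
Proof. by apply/matrixP => i j; rewrite !(adjE, mxE) rmorphM. Qed.

Lemma adjM (C : numClosedFieldType) m n k (A : 'M[C]_(m, n)) (B : 'M[C]_(n, k)) :
  mxadj (A *m B) = mxadj B *m mxadj A.
Proof.
apply/matrixP => i j; rewrite !(adjE, mxE) rmorph_sum.
by apply: eq_bigr => l _; rewrite !adjE rmorphM mulrC.
Qed.

Lemma tr_adj (C : numClosedFieldType) n (A : 'M[C]_n) : \tr (mxadj A) = (\tr A)^*.
Proof. by rewrite /mxtrace rmorph_sum; apply: eq_bigr => i _; rewrite adjE. Qed.

Definition qf (C : numClosedFieldType) d (A : 'M[C]_d) (u v : 'cV[C]_d) : C :=
  (mxadj u *m A *m v) 0 0.

Lemma qfDm (C : numClosedFieldType) d (A B : 'M[C]_d) u v :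
  qf (A + B) u v = qf A u v + qf B u v.
Proof. by rewrite /qf mulmxDr mulmxDl mxE. Qed.

Lemma qfZm (C : numClosedFieldType) d a (A : 'M[C]_d) u v :
  qf (a *: A) u v = a * qf A u v.
Proof. by rewrite /qf -scalemxAr -scalemxAl mxE. Qed.

Lemma qfDr (C : numClosedFieldType) d (A : 'M[C]_d) u v w :
  qf A u (v + w) = qf A u v + qf A u w.
Proof. by rewrite /qf mulmxDr mxE. Qed.

Lemma qfZr (C : numClosedFieldType) d (A : 'M[C]_d) a u v :
  qf A u (a *: v) = a * qf A u v.
Proof. by rewrite /qf -scalemxAr mxE. Qed.

Lemma qfDl (C : numClosedFieldType) d (A : 'M[C]_d) u v w :
  qf A (v + w) u = qf A v u + qf A w u.
Proof. by rewrite /qf adjD !mulmxDl mxE. Qed.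

Lemma qfZl (C : numClosedFieldType) d (A : 'M[C]_d) a u v :
  qf A (a *: v) u = a^* * qf A v u.
Proof. by rewrite /qf adjZ -!scalemxAl mxE. Qed.

Lemma qf_herm (C : numClosedFieldType) d (A : 'M[C]_d) u v :
  hermitian_mx A -> qf A v u = (qf A u v)^*.
Proof.
move=> hA; rewrite /qf -adjE !adjM adjK hA mulmxA //.
Qed.

Lemma CS (C : numClosedFieldType) d (A : 'M[C]_d) u v :
  psd A -> 0 < qf A u u -> qf A u v * (qf A u v)^* <= qf A u u * qf A v v.
Proof.
move=> [hA pA] al0.
set al := qf A u u; set be := qf A v v; set ga := qf A u v.
have alc : al^* = al by apply: geC0_conj; apply: ltW.
have := pA (al *: v + (- ga) *: u).
rewrite -/(qf A _ _) !(qfDl, qfDr, qfZl, qfZr) -/al -/be -/ga.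
rewrite (qf_herm _ _ hA) -/ga alc rmorphN.
move=> H.
have : 0 <= al * (al * be - ga * ga^*).
  by move: H; congr (0 <= _); ring.
by rewrite pmulr_rge0 // subr_ge0.
Qed.

Lemma ineq (C : numFieldType) (t al be g r e : C) :
  0 <= t -> 0 <= al -> 0 <= be -> 0 <= g -> g <= al * be ->
  0 <= e -> e * (1 + t + al) = 1 -> - e <= r <= e ->
  0 <= be + r * (g + - t * be).
Proof.
move=> t0 a0 b0 g0 gab e0 eq /andP[le1 le2].
have ty : t <= 1 + t + al by rewrite -addrA addrCA lerDl addr_ge0 // ?ler01.
have ay : al <= 1 + t + al by rewrite lerDr addr_ge0 // ?ler01.
have rr : r \is Num.real by rewrite -(ler_real le1) rpredN ger0_real.
move: rr; rewrite realE => /orP[] r0.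
- have rt : r * t <= 1.
    rewrite -eq (le_trans (ler_wpM2r t0 le2)) // ler_wpM2l //.
  have -> : be + r * (g + - t * be) = be * (1 - r * t) + r * g by ring.
  by rewrite addr_ge0 // mulr_ge0 // subr_ge0.
- have rt : - r * al <= 1.
    rewrite -eq; apply: (le_trans (ler_wpM2r a0 (_ : - r <= e))).
      by rewrite lerNl.
    exact: ler_wpM2l.
  have -> : be + r * (g + - t * be) =
      be * (1 - (- r) * al) + (- r) * (al * be - g) + (- r) * t * be by ring.
  by rewrite !addr_ge0 // ?mulr_ge0 // ?subr_ge0 // oppr_ge0.
Qed.

Lemma qf_delta (C : numClosedFieldType) d (A : 'M[C]_d) i :
  qf A (delta_mx i 0) (delta_mx i 0) = A i i.
Proof.
rewrite /qf (_ : mxadj (delta_mx i 0) = delta_mx 0 i).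
  by rewrite -rowE -colE !mxE.
by apply/matrixP => a b; rewrite adjE !mxE rmorph_nat andbC.
Qed.

Lemma qf0 (C : numClosedFieldType) d (u v : 'cV[C]_d) : qf 0 u v = 0.
Proof. by rewrite /qf mulmx0 mul0mx mxE. Qed.

Lemma block_pert (C : numClosedFieldType) d (rho : 'M[C]_d) :
  density rho -> ~ pure_state rho ->
  exists H, [/\ H != 0, hermitian_mx H, \tr H = 0 &
    forall s, -1 <= s <= 1 -> psd (rho + s *: H)].
Proof.
move=> [[hr pr] tr1] npure.
have [i ri] : exists i, 0 < rho i i.
  case: (pickP (fun i => 0 < rho i i)) => [i Hi|H0]; first by exists i.
  move: tr1; rewrite /mxtrace big1 => [/esym/eqP|j _]; first by rewrite oner_eq0.
  have := pr (delta_mx j 0); rewrite -/(qf _ _ _) qf_delta le_eqVlt H0 orbF.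
  by move=> /eqP <-.
pose e : 'cV[C]_d := delta_mx i 0.
have al0 : 0 < qf rho e e by rewrite /e qf_delta.
set al := qf rho e e in al0.
set c := rho *m e.
set t := (mxadj c *m c) 0 0.
have t0 : 0 <= t.
  by rewrite /t mxE; apply: sumr_ge0 => j _; rewrite adjE mulrC mul_conjC_ge0.
have gE : forall v, qf (c *m mxadj c) v v = (qf rho e v)^* * qf rho e v.
  move=> v; rewrite /qf.
  have -> : mxadj v *m (c *m mxadj c) *m v = (mxadj v *m c) *m (mxadj c *m v)
    by rewrite !mulmxA.
  rewrite mxE big_ord1 /c adjM hr !mulmxA -/(qf rho v e) -/(qf rho e v).
  by rewrite (qf_herm _ _ hr).
pose H0 := c *m mxadj c + (- t) *: rho.
have tr0 : \tr H0 = 0.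
  rewrite mxtraceD mxtraceZ tr1 mxtrace_mulC {1}/mxtrace big_ord1 -/t.
  by rewrite mulr1 addrN.
have hH0 : hermitian_mx H0.
  rewrite /hermitian_mx /H0 adjD adjZ adjM adjK hr; congr (_ + _ *: _).
  by rewrite rmorphN; congr (- _); exact: geC0_conj.
have H0nz : H0 != 0.
  apply/eqP => H00; apply: npure.
  have q0 := congr1 (fun M => qf M e e) H00; move: q0 => /=.
  rewrite qf0 /H0 qfDm qfZm gE -/al (geC0_conj (ltW al0)) => q0.
  have tal : t = al.
    have : (al - t) * al = 0 by rewrite -q0; ring.
    move/eqP; rewrite mulf_eq0 (gt_eqF al0) orbF subr_eq0 => /eqP ->. done.
  have cc : c *m mxadj c = t *: rho.
    by apply/eqP; rewrite -subr_eq0 -scaleNr -H00.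
  have tn0 : t != 0 by rewrite tal gt_eqF.
  have rhoE : rho = t^-1 *: (c *m mxadj c) by rewrite cc scalerA mulVf ?scale1r.
  exists ((sqrtC t)^-1 *: c).
  rewrite adjZ -scalemxAl -scalemxAr scalerA.
  rewrite (geC0_conj (_ : 0 <= (sqrtC t)^-1)); last by rewrite invr_ge0 sqrtC_ge0.
  by rewrite -invfM -expr2 sqrtCK.
have ep0 : 0 < 1 + t + al by rewrite -addrA ltr_pwDl ?ltr01 // addr_ge0 // ltW.
pose ep := (1 + t + al)^-1.
have ep0' : 0 < ep by rewrite invr_gt0.
exists (ep *: H0); split.
- by rewrite scaler_eq0 negb_or H0nz (gt_eqF ep0').
- by rewrite /hermitian_mx adjZ hH0 geC0_conj // ltW.
- by rewrite mxtraceZ tr0 mulr0.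
move=> s /andP[s1 s2].
have sr : s \is Num.real by rewrite (ler_real s2) rpred1.
split.
  by rewrite /hermitian_mx adjD !adjZ hr hH0 conj_Creal // (geC0_conj (ltW ep0')).
move=> v; rewrite -/(qf _ v v) qfDm !qfZm /H0 qfDm qfZm gE mulrA.
apply: (ineq (al:=al) (e:=ep)) => //.
- exact: ltW.
- exact: (pr v).
- by have := mul_conjC_ge0 (qf rho e v)^*; rewrite conjCK.
- have := CS v (conj hr pr) al0.
  by rewrite -/al mulrC.
- exact: ltW.
- by rewrite mulVf // gt_eqF.
- apply/andP; split.
    by rewrite -mulN1r ler_wpM2r // ltW.
  by rewrite -[X in _ <= X]mul1r ler_wpM2r // ltW.
Qed.

Lemma normalize_vec (C : numClosedFieldType) n R (M : 'M[C]_(n, R)) (w : 'rV[C]_n) :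
  w != 0 -> w *m M = 0 -> (forall k, w 0 k \is Num.real) ->
  exists c : 'rV[C]_n, [/\ c != 0, c *m M = 0 &
     forall k, c 0 k \is Num.real /\ `|c 0 k| <= 1].
Proof.
move=> wn0 wM wr.
pose N := 1 + \sum_k `|w 0 k|.
have N0 : 0 < N by rewrite ltr_pwDl ?ltr01 // sumr_ge0.
exists (N^-1 *: w); split.
- by rewrite scaler_eq0 negb_or wn0 invr_eq0 gt_eqF.
- by rewrite -scalemxAl wM scaler0.
move=> k; rewrite mxE; split.
  by rewrite rpredM // ?rpredV // rpredD // ?rpred1 // rpred_sum // => j _; apply: normr_real.
rewrite normrM ger0_norm ?invr_ge0 ?(ltW N0) // ler_pdivrMl // mulr1.
rewrite /N (bigD1 k) //= addrCA lerDl addr_ge0 ?ler01 // sumr_ge0 //.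
Qed.

Lemma real_kernel (C : numClosedFieldType) n R (M : 'M[C]_(n, R)) :
  (R < n)%N -> (forall k i, M k i \is Num.real) ->
  exists c : 'rV[C]_n, [/\ c != 0, c *m M = 0 &
     forall k, c 0 k \is Num.real /\ `|c 0 k| <= 1].
Proof.
move=> Rn Mr.
have kn0 : kermx M != 0.
  rewrite -mxrank_eq0 mxrank_ker subn_eq0 -ltnNge.
  exact: leq_ltn_trans (rank_leq_col M) Rn.
have [k rk] : exists k, row k (kermx M) != 0.
  case: (pickP (fun k => row k (kermx M) != 0)) => [k Hk|H]; first by exists k.
  case/negP: kn0; apply/eqP/row_matrixP => k; rewrite row0; apply/eqP.
  by move: (H k) => /negbFE.
set u := row k (kermx M) in rk.
have uM : u *m M = 0 by apply/sub_kermxP; exact: row_sub.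
clearbody u.
have uMe : forall i, \sum_j u 0 j * M j i = 0.
  by move=> i; move/matrixP: uM => /(_ 0 i); rewrite !mxE.
have Mc : forall j i, (M j i)^* = M j i by move=> j i; apply: conj_Creal.
case: (pickP (fun j => u 0 j + (u 0 j)^* != 0)) => [j0 Hj0|H].
- apply: (normalize_vec (w := \row_j (u 0 j + (u 0 j)^*))).
  + apply/negP => /eqP /matrixP /(_ 0 j0); rewrite !mxE => E.
    by rewrite E eqxx in Hj0.
  + apply/matrixP => a i; rewrite ord1 !mxE.
    under eq_bigr do rewrite mxE mulrDl.
    rewrite big_split /= uMe add0r.
    under eq_bigr do rewrite -(Mc _ i) -rmorphM.
    by rewrite -rmorph_sum uMe rmorph0.
  + by move=> j; rewrite mxE CrealE rmorphD /= conjCK addrC.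
- have Hu : forall j, (u 0 j)^* = - u 0 j.
    by move=> j; apply/eqP; rewrite -addr_eq0 addrC; move: (H j) => /negbFE.
  apply: (normalize_vec (w := \row_j ('i * u 0 j))).
  + apply/negP => /eqP E; case/negP: rk; apply/eqP/matrixP => a j.
    move/matrixP: E => /(_ 0 j); rewrite ord1 !mxE.
    by move/eqP; rewrite mulf_eq0 (negbTE (neq0Ci C)) /= => /eqP.
  + apply/matrixP => a i; rewrite ord1 !mxE.
    under eq_bigr do rewrite mxE -mulrA.
    by rewrite -mulr_sumr uMe mulr0.
  + by move=> j; rewrite mxE CrealE rmorphM /= conjCi Hu mulrNN.
Qed.

Lemma tr_real (C : numClosedFieldType) d (A H : 'M[C]_d) :
  hermitian_mx A -> hermitian_mx H -> \tr (A *m H) \is Num.real.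
Proof.
move=> hA hH; rewrite CrealE -tr_adj adjM hA hH mxtrace_mulC //.
Qed.

Theorem theorem1 (C : numClosedFieldType) (d : nat) (Z : finType) (R : nat)
  (p : Z -> C) (A : 'I_R -> Z -> 'M[C]_d) (b : 'I_R -> C)
  (hp0 : forall z, 0 <= p z) (hp1 : \sum_(z : Z) p z = 1)
  (hA : forall i z, hermitian_mx (A i z))
  (hb : forall i, b i \is Num.real)
  (x : {ffun Z -> 'M[C]_d}) :
  extreme_point (feasible p A b) x ->
  forall S : {set Z}, (forall z, z \in S -> ~ pure_state (x z)) ->
  (#|S| <= R)%N.
Proof.
move=> [Kx ext] S nS; rewrite leqNgt; apply/negP => RS.
have [Hf hHf] : exists Hf : Z -> 'M[C]_d, forall z, z \in S ->
    [/\ Hf z != 0, hermitian_mx (Hf z), \tr (Hf z) = 0 &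
        forall s, -1 <= s <= 1 -> psd (x z + s *: Hf z)].
  apply: (@fin_all_exists Z (fun _ => 'M[C]_d) (fun z H => z \in S ->
    [/\ H != 0, hermitian_mx H, \tr H = 0 &
        forall s, -1 <= s <= 1 -> psd (x z + s *: H)])) => z; case: (boolP (z \in S)) => zS.
    have [H ?] := block_pert (Kx.1 z) (nS z zS); by exists H.
  by exists 0.
have [z0 z0S] : exists z0, z0 \in S.
  by apply/card_gt0P; exact: leq_ltn_trans (leq0n R) RS.
pose M := \matrix_(k < #|S|, i < R)
   (p (enum_val k) * \tr (A i (enum_val k) *m Hf (enum_val k))).
have Mr : forall k i, M k i \is Num.real.
  move=> k i; rewrite mxE rpredM //; first exact: ger0_real.
  by have [_ h _ _] := hHf _ (enum_valP k); apply: tr_real.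
have [c [cn0 cM cr]] := real_kernel RS Mr.
pose cz z := if z \in S then c 0 (enum_rank_in z0S z) else 0.
have czr : forall z, cz z \is Num.real /\ `|cz z| <= 1.
  by move=> z; rewrite /cz; case: (z \in S) => //; rewrite normr0 ler01 rpred0.
pose xs s := [ffun z => x z + (s * cz z) *: Hf z].
have feas : forall s, s \is Num.real -> `|s| <= 1 -> feasible p A b (xs s).
  move=> s sr s1; split.
  - move=> z; rewrite ffunE; case zS: (z \in S).
      have [_ _ tr0 ps] := hHf z zS; split.
        apply: ps; rewrite -real_ler_norml ?rpredM //; last by case: (czr z).
        by rewrite normrM mulr_ile1 //; case: (czr z).
      by rewrite mxtraceD mxtraceZ tr0 mulr0 addr0; case: (Kx.1 z).
    by rewrite /cz zS mulr0 scale0r addr0; exact: Kx.1 z.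
  - move=> i; rewrite -(Kx.2 i).
    under eq_bigr do rewrite ffunE mulmxDr mxtraceD -scalemxAr mxtraceZ mulrDr.
    rewrite big_split /= -[RHS]addr0; congr (_ + _).
    rewrite (bigID (fun z => z \in S)) /= [X in _ + X]big1 ?addr0; last first.
      by move=> z /negbTE zS; rewrite /cz zS mulr0 mul0r mulr0.
    rewrite big_enum_val /=.
    transitivity (s * \sum_k c 0 k * M k i).
      rewrite mulr_sumr; apply: eq_bigr => k _.
      rewrite /cz enum_valP (enum_valK_in z0S) mxE; ring.
    by move/matrixP: cM => /(_ 0 i); rewrite !mxE => ->; rewrite mulr0.
have [k0 ck0] : exists k, c 0 k != 0.
  case: (pickP (fun k => c 0 k != 0)) => [k Hk|H]; first by exists k.
  case/negP: cn0; apply/eqP/matrixP => a k; rewrite ord1 mxE.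
  by move: (H k) => /negbFE /eqP.
have h2 : (2 : C)^-1 \is Num.real by rewrite rpredV rpred_nat.
have h2' : 0 < (2 : C)^-1 < 1 by rewrite invr_gt0 ltr0n invf_lt1 ?ltr0n ?ltr1n.
have f1 : feasible p A b (xs 1) by apply: feas; rewrite ?rpred1 ?normr1.
have f2 : feasible p A b (xs (-1)) by apply: feas; rewrite ?rpredN ?rpred1 ?normrN ?normr1.
have [E1 _] : xs 1 = x /\ xs (-1) = x.
  apply: (ext (2^-1)) => //.
  apply/ffunP => z; rewrite !ffunE; apply/matrixP => a j; rewrite !mxE.
  by field.
move/ffunP: E1 => /(_ (enum_val k0)); rewrite ffunE => /eqP.
rewrite -subr_eq0 addrAC subrr add0r mul1r scaler_eq0.
have [hn0 _ _ _] := hHf _ (enum_valP k0).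
by rewrite (negbTE hn0) orbF /cz enum_valP (enum_valK_in z0S) (negbTE ck0).
Qed.
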